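(* Let $\mathcal{H}=(\mathcal{A},\Delta_{\mathcal{A}},S_{\mathcal{A}},\varepsilon_{\mathcal{A}})$ be a Hopf algebra over a field $k$, let $\mathcal{B},\mathcal{C}$ be unital $k$-algebras and $\Phi:\mathcal{A}\to\mathcal{B}$, $\Psi:\mathcal{A}\to\mathcal{C}$ surjective unital algebra homomorphisms. Then $\Psi$ and $\Phi$ cocommute, i.e. $(\Psi\otimes\Phi)\circ\Delta_{\mathcal{A}}=(\Psi\otimes\Phi)\circ\Delta_{\mathcal{A}}^{\mathrm{op}}$, if and only if \[(\Phi\otimes\Psi)(\mathrm{ad}(x))=\mathds{1}_{\mathcal{B}}\otimes\Psi(x)\quad\text{for all }x\in\mathcal{A}.\]
   Context: Sweedler notation $\Delta_{\mathcal{A}}(x)=x_{(1)}\otimes x_{(2)}$, $(\Delta_{\mathcal{A}}\otimes\mathrm{id})\Delta_{\mathcal{A}}(x)=x_{(1)}\otimes x_{(2)}\otimes x_{(3)}$. $\Delta_{\mathcal{A}}^{\mathrm{op}}=\sigma\circ\Delta_{\mathcal{A}}$ is the opposite comultiplication, $\Delta^{\mathrm{op}}_{\mathcal{A}}(x)=x_{(2)}\otimes x_{(1)}$. The adjoint coaction $\mathrm{ad}:\mathcal{A}\to\mathcal{A}\otimes\mathcal{A}$ is the linear map $\mathrm{ad}(x)=x_{(1)}S_{\mathcal{A}}(x_{(3)})\otimes x_{(2)}$. *)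

(* Defs.v *)
From HB Require Import structures.
From mathcomp Require Import all_boot all_order all_algebra.
Set Implicit Arguments. Unset Strict Implicit. Unset Printing Implicit Defensive.
Import Order.TTheory GRing.Theory Num.Theory.
Local Open Scope ring_scope.

(* Elements of the algebraic tensor product V (x) W of two K-vector spaces
   (K a field) are represented by finite formal sums  sum_i v_i (x) w_i,
   i.e. by sequences of pairs.  Two representatives denote the same tensor
   iff they agree under every product functional f (x) g with f in V*, g in
   W*  (over a field the image of V* (x) W* in (V (x) W)* separates points,
   so this is exactly equality in V (x) W). *)

Definition tensor2 (V W : Type) := seq (V * W).
Definition tensor3 (U V W : Type) := seq (U * V * W).

Definition teq (K : fieldType) (V W : lmodType K) (s t : tensor2 V W) : Prop :=
  forall (f : {linear V -> K^o}) (g : {linear W -> K^o}),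
    \sum_(p <- s) (f p.1 * g p.2 : K) = \sum_(p <- t) (f p.1 * g p.2 : K).

Definition teq3 (K : fieldType) (U V W : lmodType K) (s t : tensor3 U V W) : Prop :=
  forall (f : {linear U -> K^o}) (g : {linear V -> K^o}) (h : {linear W -> K^o}),
    \sum_(p <- s) (f p.1.1 * g p.1.2 * h p.2 : K)
    = \sum_(p <- t) (f p.1.1 * g p.1.2 * h p.2 : K).

Definition tmap (V W V' W' : Type) (f : V -> V') (g : W -> W') (t : tensor2 V W)
  : tensor2 V' W' := [seq (f p.1, g p.2) | p <- t].

Definition tflip (V W : Type) (t : tensor2 V W) : tensor2 W V :=
  [seq (p.2, p.1) | p <- t].

(* A Hopf algebra structure (Delta, S, epsilon) on a unital associative
   K-algebra A.  cop x is a representative of Delta(x) = x_(1) (x) x_(2). *)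
Record hopf_structure (K : fieldType) (A : algType K) := HopfStructure {
  cop : A -> tensor2 A A;
  cnt : A -> K;
  ant : A -> A;
  cop_linear : forall (a : K) (x y : A),
    teq (cop (a *: x + y)) ([seq (a *: p.1, p.2) | p <- cop x] ++ cop y);
  cop_mul : forall x y : A,
    teq (cop (x * y)) [seq (p.1 * q.1, p.2 * q.2) | p <- cop x, q <- cop y];
  cop_one : teq (cop 1) [:: (1, 1)];
  coassoc : forall x : A,
    teq3 [seq (q.1, q.2, p.2) | p <- cop x, q <- cop p.1]
         [seq (p.1, q.1, q.2) | p <- cop x, q <- cop p.2];
  cnt_linear : forall (a : K) (x y : A), cnt (a *: x + y) = a * cnt x + cnt y;
  cnt_mul : forall x y : A, cnt (x * y) = cnt x * cnt y;
  cnt_one : cnt 1 = 1;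
  counitl : forall x : A, \sum_(p <- cop x) cnt p.1 *: p.2 = x;
  counitr : forall x : A, \sum_(p <- cop x) cnt p.2 *: p.1 = x;
  ant_linear : forall (a : K) (x y : A), ant (a *: x + y) = a *: ant x + ant y;
  antl : forall x : A, \sum_(p <- cop x) ant p.1 * p.2 = cnt x *: 1;
  antr : forall x : A, \sum_(p <- cop x) p.1 * ant p.2 = cnt x *: 1
}.

(* adjoint coaction  ad(x) = x_(1) S(x_(3)) (x) x_(2), with
   x_(1) (x) x_(2) (x) x_(3) = (Delta (x) id) Delta (x). *)
Definition ad (K : fieldType) (A : algType K) (H : hopf_structure A) (x : A)
  : tensor2 A A :=
  [seq (q.1 * ant H p.2, q.2) | p <- cop H x, q <- cop H p.1].

(* Main.v *)
Require Import Defs.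
From HB Require Import structures.
From mathcomp Require Import all_boot all_order all_algebra.
From mathcomp Require Import boolp classical_sets.
Import GRing.Theory.
Local Open Scope ring_scope.
Set Implicit Arguments. Unset Strict Implicit.

Section MkLin.
Variables (K : fieldType) (V : lmodType K) (h : V -> K)
  (H : forall a x y, h (a *: x + y) = a * h x + h y).
Definition hfun : V -> K^o := h.
Let hlin : linear_for *:%R hfun.
Proof. move=> a x y; rewrite /hfun H. by []. Qed.
Definition mkLin : {linear V -> K^o} :=
  HB.pack hfun (GRing.isLinear.Build K V K^o *:%R hfun hlin).
Lemma mkLinE v : mkLin v = h v. Proof. by []. Qed.
End MkLin.

Lemma sep_one (K : fieldType) (W : lmodType K) (w : W) :
  w != 0 -> exists h : {linear W -> K^o}, h w = 1.
Proof.
move=> w0.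
pose isg (G : set (W * K)) :=
  [/\ (forall x y k, G x -> G y -> G (k *: x.1 + y.1, k * x.2 + y.2)),
      (forall v a b, G (v,a) -> G (v,b) -> a = b) & G (w,1)].
pose P (G : set (W * K)) := (exists z, G z) -> isg G.
have [A [PA Amax]] : exists A, P A /\ (forall B, (A `<` B)%classic -> ~ P B).
  apply: Zorn_bigcup => F FP Ftot [z [X FX Xz]].
  have isgY : forall Y, F Y -> (exists z, Y z) -> isg Y.
    by move=> Y FY; apply: FP.
  have key : forall x y, (\bigcup_(X in F) X)%classic x ->
      (\bigcup_(X in F) X)%classic y -> exists2 Y, F Y & Y x /\ Y y.
    move=> x y [X1 FX1 X1x] [X2 FX2 X2y].
    case: (Ftot _ _ FX1 FX2) => S.
      by exists X2 => //; split=> //; apply: S.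
    by exists X1 => //; split=> //; apply: S.
  split.
  - move=> x y k /key /[apply] -[Y FY [Yx Yy]].
    have [Ycl _ _] := isgY Y FY (ex_intro _ x Yx).
    by exists Y => //; apply: Ycl.
  - move=> v a b /key /[apply] -[Y FY [Yx Yy]].
    have [_ Yf _] := isgY Y FY (ex_intro _ _ Yx).
    exact: Yf Yx Yy.
  - have [_ _ Xw] := isgY X FX (ex_intro _ z Xz).
    by exists X.
pose G0 (z : W * K) := z.1 = z.2 *: w.
have Ane : exists z, A z.
  apply: contrapT => Ae; apply: (Amax G0).
    split; first by move=> z Az; exfalso; apply: Ae; exists z.
    move=> G0A; apply: Ae; exists (w, 1); apply: G0A.
    by rewrite /G0 /= scale1r.
  move=> _; split.
  - move=> x y k; rewrite /G0 => -> ->.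
    by rewrite scalerDl scalerA.
  - move=> v a b; rewrite /G0 /= => -> /eqP.
    rewrite -subr_eq0 -scalerBl scaler_eq0 (negbTE w0) orbF subr_eq0.
    by move/eqP.
  - by rewrite /G0 /= scale1r.
have [Acl Afun Aw] := PA Ane.
have A00 : A (0, 0).
  have := Acl _ _ (-1) Aw Aw.
  by rewrite /= scaleN1r addNr mulN1r addNr.
have Adom : forall v, exists a, A (v, a).
  move=> v; apply: contrapT => nv.
  pose B (z : W * K) := exists x k, A x /\ z = (x.1 + k *: v, x.2).
  apply: (Amax B).
    split.
      move=> z Az; exists z, 0; split => //.
      by rewrite scale0r addr0; case: z {Az}.
    move=> BA; apply: nv; exists 0.
    have : B (v, 0) by exists (0, 0), 1; rewrite /= scale1r add0r.
    by move/BA.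
  move=> _; split.
  - move=> z1 z2 k [x1 [k1 [Ax1 ->]]] [x2 [k2 [Ax2 ->]]] /=.
    exists (k *: x1.1 + x2.1, k * x1.2 + x2.2), (k * k1 + k2); split.
      exact: Acl.
    congr pair.
    by rewrite /= scalerDr scalerA scalerDl addrACA.
  - move=> u a b [[x1 xa] [k [Ax e1]]] [[y1 ya] [l [Ay e2]]].
    case: e1 => eu ->; case: e2 => eu' ->.
    have [/eqP kl|kl] := eqVneq (l - k) 0.
      move: kl; rewrite subr_eq0 => /eqP lk.
      move: eu'; rewrite eu lk => /addIr ex.
      by apply: (Afun x1); rewrite // ex.
    exfalso; apply: nv.
    have Axy := Acl _ _ (-1) Ay Ax.
    have := Acl _ _ (l - k)^-1 Axy A00.
    rewrite /= !addr0 => Av; exists ((l - k)^-1 * (-1 * ya + xa)).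
    suff <- : (l - k)^-1 *: (-1 *: y1 + x1) = v by [].
    have e : x1 - y1 = (l - k) *: v.
      have e0 : x1 + k *: v = y1 + l *: v by rewrite -eu -eu'.
      rewrite scalerBl -[x1](addrK (k *: v)) e0.
      by rewrite addrAC [y1 + _]addrC addrK.
    by rewrite scaleN1r [- y1 + _]addrC e scalerA mulVf // scale1r.
  - by rewrite /B; exists (w, 1); exists 0; rewrite scale0r addr0.
pose h v := sval (cid (Adom v)).
have Ah v : A (v, h v) by rewrite /h; case: cid.
have hlin : forall a x y, h (a *: x + y) = a * h x + h y.
  move=> a x y; apply: (Afun (a *: x + y)) => //.
  exact: (Acl (x, h x) (y, h y) a).
exists (@mkLin _ _ h hlin); rewrite mkLinE.
exact: (Afun w).
Qed.

Lemma sep (K : fieldType) (W : lmodType K) (w : W) :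
  (forall h : {linear W -> K^o}, h w = 0) -> w = 0.
Proof.
move=> H; apply/eqP; apply: contraT => w0.
have [h hw] := sep_one w0.
by move: (H h); rewrite hw => /eqP; rewrite oner_eq0.
Qed.

Definition lin1 (K : fieldType) (V : lmodType K) (f : V -> K) :=
  forall a x y, f (a *: x + y) = a * f x + f y.

Lemma lin1_0 (K : fieldType) (V : lmodType K) (f : V -> K) : lin1 f -> f 0 = 0.
Proof.
move=> H; have := H 1 0 0; rewrite scale1r addr0 mul1r => e.
by apply: (@addrI _ (f 0)); rewrite addr0 -e.
Qed.

Lemma lin1_sum (K : fieldType) (V : lmodType K) (f : V -> K) (I : Type)
  (r : seq I) (x : I -> V) :
  lin1 f -> f (\sum_(i <- r) x i) = \sum_(i <- r) f (x i).
Proof.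
move=> H; exact: (raddf_sum (@mkLin _ _ f H) r xpredT x).
Qed.

Lemma lin1_Z (K : fieldType) (V : lmodType K) (f : V -> K) a x :
  lin1 f -> f (a *: x) = a * f x.
Proof. by move=> H; rewrite -[a *: x]addr0 H lin1_0 // addr0. Qed.

Section GL.
Variables (K : fieldType) (W : lmodType K) (Q : Type) (sc : K -> Q -> Q)
  (Test : (Q -> K) -> Prop) (Good : (Q -> K) -> Prop).
Hypothesis Htest : forall phi, Test phi -> forall k q, phi (sc k q) = k * phi q.
Hypothesis HP : forall psi, Good psi -> forall l : seq Q,
  (forall phi, Test phi -> \sum_(q <- l) phi q = 0) -> \sum_(q <- l) psi q = 0.

Definition SS (F : Q -> W -> K) (S : seq (seq Q * W)) :=
  \sum_(s <- S) \sum_(q <- s.1) F q s.2.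

Lemma merge (Psi : Q -> W -> K) s0 S' (al : seq Q * W -> K) :
  (forall k q c, Psi (sc k q) c = k * Psi q c) ->
  (forall q, lin1 (Psi q)) ->
  s0.2 = \sum_(s <- S') al s *: s.2 ->
  SS Psi (s0 :: S') =
  SS Psi [seq (s.1 ++ [seq sc (al s) q | q <- s0.1], s.2) | s <- S'].
Proof.
move=> Hsc Hlin e.
rewrite /SS big_cons big_map.
under [RHS]eq_bigr => s _ do rewrite big_cat /= big_map.
rewrite big_split /= addrC; congr (_ + _).
rewrite e.
under eq_bigr => q _ do rewrite lin1_sum //.
rewrite exchange_big /=; apply: eq_bigr => s _; apply: eq_bigr => q _.
by rewrite Hsc lin1_Z.
Qed.


Lemma GL (n : nat) : forall S : seq (seq Q * W), (size S <= n)%N ->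
  (forall phi, Test phi -> forall h : {linear W -> K^o},
     SS (fun q c => phi q * h c) S = 0) ->
  forall F : Q -> W -> K, (forall c, Good (F^~ c)) ->
  (forall k q c, F (sc k q) c = k * F q c) ->
  (forall q, lin1 (F q)) -> SS F S = 0.
Proof.
elim: n => [|n IH] [|s0 S'] //= Hn Hyp F HG Fsc Flin; try by rewrite /SS big_nil.
have Plin : forall (phi : Q -> K) (h : {linear W -> K^o}) (q : Q), lin1 (fun c => phi q * h c).
  move=> phi h q a x y /=.
  by rewrite linearP /= mulrDr mulrCA.
case: (pselect (exists al : seq Q * W -> K, s0.2 = \sum_(s <- S') al s *: s.2)).
  move=> [al e]; rewrite (@merge F s0 S' al Fsc Flin e).
  apply: IH => //; first by rewrite size_map.
  move=> phi Tp h; rewrite -(@merge _ s0 S' al).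
  - exact: Hyp.
  - by move=> k q c; rewrite Htest // mulrA.
  - exact: Plin.
  - exact: e.
move=> ne.
have k0 : forall phi, Test phi -> \sum_(q <- s0.1) phi q = 0.
  move=> phi Tp; apply: contrapT => /eqP k0n; apply: ne.
  pose z := \sum_(s <- s0 :: S') (\sum_(q <- s.1) phi q) *: s.2.
  have z0 : z = 0.
    apply: sep => h; rewrite /z raddf_sum /=.
    apply: etrans (Hyp phi Tp h); rewrite /SS; apply: eq_bigr => s _.
    by rewrite linearZ -mulr_suml.
  exists (fun s => - (\sum_(q <- s.1) phi q) / \sum_(q <- s0.1) phi q).
  move: z0; rewrite /z big_cons => /eqP; rewrite addr_eq0 => /eqP e.
  apply: (scalerI k0n); rewrite e scaler_sumr -sumrN.
  apply: eq_bigr => s _.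
  by rewrite scalerA mulrCA mulfV // mulr1 scaleNr.
have HF0 : \sum_(q <- s0.1) F q s0.2 = 0 by apply: (HP (HG s0.2)).
rewrite /SS big_cons HF0 add0r.
apply: IH => // phi Tp h.
have := Hyp phi Tp h; rewrite /SS big_cons -mulr_suml k0 // mul0r add0r.
by [].
Qed.
End GL.

Definition bil (K : fieldType) (V W : lmodType K) (F : V -> W -> K) :=
  (forall c, lin1 (F^~ c)) /\ (forall a, lin1 (F a)).

Lemma linf_lin1 (K : fieldType) (V : lmodType K) (f : {linear V -> K^o}) (m : K) :
  lin1 (fun a => f a * m).
Proof. by move=> k x y; rewrite linearP mulrDl mulrA. Qed.

Lemma PL (K : fieldType) (V W : lmodType K) (u : seq (V * W)) :
  (forall (f : {linear V -> K^o}) (h : {linear W -> K^o}),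
      \sum_(p <- u) f p.1 * h p.2 = 0) ->
  forall F, bil F -> \sum_(p <- u) F p.1 p.2 = 0.
Proof.
move=> Hu F [F1 F2].
pose S := [seq ([:: p.1], p.2) | p <- u].
have -> : \sum_(p <- u) F p.1 p.2 = SS F S.
  by rewrite /SS big_map; apply: eq_bigr => p _; rewrite big_seq1.
apply: (@GL K W V (fun k q => k *: q)
  (fun phi => exists f : {linear V -> K^o}, forall q, phi q = f q)
  (fun psi => lin1 psi) _ _ (size S)) => //.
- by move=> phi [f Hf] k q; rewrite !Hf linearZ.
- move=> psi Hpsi l Hl; rewrite -lin1_sum //.
  suff -> : \sum_(q <- l) q = 0 by rewrite lin1_0.
  apply: sep => f; rewrite raddf_sum.
  exact: (Hl (fun q => f q) (ex_intro _ f (fun _ => erefl))).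
- move=> phi [f Hf] h; apply: etrans (Hu f h); rewrite /SS big_map.
  by apply: eq_bigr => p _; rewrite big_seq1 Hf.
- by move=> k q c; exact: (lin1_Z k q (F1 c)).
Qed.

Definition tril (K : fieldType) (U V W : lmodType K) (F : U -> V -> W -> K) :=
  [/\ (forall b c, lin1 (fun a => F a b c)), (forall a c, lin1 (fun b => F a b c))
    & (forall a b, lin1 (F a b))].

Lemma TL (K : fieldType) (U V W : lmodType K) (u : seq (U * V * W)) :
  (forall (f : {linear U -> K^o}) (g : {linear V -> K^o}) (h : {linear W -> K^o}),
      \sum_(p <- u) f p.1.1 * g p.1.2 * h p.2 = 0) ->
  forall F, tril F -> \sum_(p <- u) F p.1.1 p.1.2 p.2 = 0.
Proof.
move=> Hu F [F1 F2 F3].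
pose S := [seq ([:: p.1], p.2) | p <- u].
have -> : \sum_(p <- u) F p.1.1 p.1.2 p.2 = SS (fun q c => F q.1 q.2 c) S.
  by rewrite /SS big_map; apply: eq_bigr => p _; rewrite big_seq1.
apply: (@GL K W (U * V)%type (fun k q => (k *: q.1, q.2))
  (fun phi => exists (f : {linear U -> K^o}) (g : {linear V -> K^o}),
      forall q, phi q = f q.1 * g q.2)
  (fun psi => bil (fun a b => psi (a, b))) _ _ (size S)) => //.
- by move=> phi [f [g Hf]] k q; rewrite !Hf linearZ /= mulrA.
- move=> psi Hpsi l Hl.
  have -> : \sum_(q <- l) psi q = \sum_(q <- l) (fun a b => psi (a, b)) q.1 q.2.
    by apply: eq_bigr => -[].
  apply: (@PL K U V l _ (fun a b => psi (a, b)) Hpsi) => f h.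
  exact: (Hl (fun q => f q.1 * h q.2) (ex_intro _ f (ex_intro _ h (fun _ => erefl)))).
- move=> phi [f [g Hf]] h; apply: etrans (Hu f g h); rewrite /SS big_map.
  by apply: eq_bigr => p _; rewrite big_seq1 Hf.
- by move=> c; split=> [b|a] /=; [exact: F1|exact: F2].
- by move=> k q c /=; exact: (lin1_Z k q.1 (F1 q.2 c)).
Qed.

Lemma teq3_tril (K : fieldType) (U V W : lmodType K) (s t : tensor3 U V W) :
  teq3 s t -> forall F, tril F ->
  \sum_(p <- s) F p.1.1 p.1.2 p.2 = \sum_(p <- t) F p.1.1 p.1.2 p.2.
Proof.
move=> H F HF; apply/eqP; rewrite -subr_eq0; apply/eqP.
pose u := s ++ [seq (- p.1.1, p.1.2, p.2) | p <- t].
have key : forall G : U -> V -> W -> K, (forall b c, lin1 (fun a => G a b c)) ->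
    \sum_(p <- u) G p.1.1 p.1.2 p.2 =
    \sum_(p <- s) G p.1.1 p.1.2 p.2 - \sum_(p <- t) G p.1.1 p.1.2 p.2.
  move=> G HG; rewrite big_cat big_map /= -sumrN; congr (_ + _).
  apply: eq_bigr => p _.
  by rewrite -scaleN1r (lin1_Z _ _ (HG _ _)) mulN1r.
have [F1 _ _] := HF.
rewrite -(key F F1); apply: TL => // f g h.
rewrite (key (fun a b c => f a * g b * h c)) ?H ?subrr // => b c.
have := linf_lin1 f (g b * h c).
by congr lin1; apply: funext => a; rewrite mulrA.
Qed.

Definition linm (K : fieldType) (M N : lmodType K) (l : M -> N) :=
  forall k x y, l (k *: x + y) = k *: l x + l y.

Lemma linm_comp (K : fieldType) (M N P : lmodType K) (l1 : M -> N) (l2 : N -> P) :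
  linm l1 -> linm l2 -> linm (fun x => l2 (l1 x)).
Proof. by move=> H1 H2 k x y; rewrite H1 H2. Qed.

Lemma linm_lin (K : fieldType) (M N : lmodType K) (l : {linear M -> N}) :
  linm l.
Proof. by move=> k x y; rewrite linearP. Qed.

Lemma linm_mulr (K : fieldType) (R : algType K) (m : R) : linm (fun x : R => x * m).
Proof. by move=> k x y; rewrite mulrDl -scalerAl. Qed.

Lemma linm_mull (K : fieldType) (R : algType K) (m : R) : linm (fun x : R => m * x).
Proof. by move=> k x y; rewrite mulrDr -scalerAr. Qed.

Lemma lin1_lf (K : fieldType) (M N : lmodType K) (f : {linear N -> K^o}) (l : M -> N) :
  linm l -> lin1 (fun x => f (l x)).
Proof. by move=> H k x y; rewrite H linearP. Qed.

Lemma lin1_mulr (K : fieldType) (M : lmodType K) (phi : M -> K) (m : K) :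
  lin1 phi -> lin1 (fun x => phi x * m).
Proof. by move=> H k x y; rewrite H mulrDl mulrA. Qed.

Lemma lin1_mull (K : fieldType) (M : lmodType K) (phi : M -> K) (m : K) :
  lin1 phi -> lin1 (fun x => m * phi x).
Proof. by move=> H k x y; rewrite H mulrDr mulrCA. Qed.

Lemma lin1_sumf (K : fieldType) (M : lmodType K) (I : Type) (r : seq I)
  (F : I -> M -> K) : (forall i, lin1 (F i)) -> lin1 (fun c => \sum_(i <- r) F i c).
Proof.
move=> H k x y; rewrite mulr_sumr -big_split /=.
by apply: eq_bigr => i _; rewrite H.
Qed.

Lemma teqL (K : fieldType) (V W : lmodType K) (s t : tensor2 V W) :
  teq s t -> forall al be, lin1 al -> lin1 be ->
  \sum_(p <- s) al p.1 * be p.2 = \sum_(p <- t) al p.1 * be p.2.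
Proof. by move=> H al be Ha Hb; exact: (H (mkLin Ha) (mkLin Hb)). Qed.

Lemma copL (K : fieldType) (A : algType K) (H : hopf_structure A) al be :
  lin1 al -> lin1 be -> lin1 (fun X => \sum_(q <- cop H X) al q.1 * be q.2).
Proof.
move=> Ha Hb k x y; rewrite (teqL (cop_linear H k x y) Ha Hb).
rewrite big_cat big_map mulr_sumr; congr (_ + _).
by apply: eq_bigr => p _ /=; rewrite (lin1_Z _ _ Ha) mulrA.
Qed.

Unset Implicit Arguments.
Theorem proposition3p9 (K : fieldType) (A : algType K) (H : hopf_structure A)
  (B C : algType K) (Phi : {lrmorphism A -> B}) (Psi : {lrmorphism A -> C})
  (Phi_surj : forall b : B, exists a : A, Phi a = b)
  (Psi_surj : forall c : C, exists a : A, Psi a = c) :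
  (forall x : A,
     teq (tmap Psi Phi (cop H x)) (tmap Psi Phi (tflip (cop H x))))
  <->
  (forall x : A, teq (tmap Phi Psi (ad H x)) [:: (1, Psi x)]).
Proof.
split.
- move=> Hc x f g.
  have Hc' : forall y (f : {linear C -> K^o}) (g : {linear B -> K^o}),
      \sum_(p <- cop H y) f (Psi p.1) * g (Phi p.2) =
      \sum_(p <- cop H y) f (Psi p.2) * g (Phi p.1).
    move=> y f' g'; have := Hc y f' g'.
    by rewrite /tmap /tflip !big_map.
  rewrite big_seq1 /tmap /ad big_map big_allpairs_dep /=.
  pose T (a b c : A) := g (Psi a) * f (Phi b * Phi (ant H c)).
  have step1 : forall p : A * A,
      \sum_(q <- cop H p.1) f (Phi (q.1 * ant H p.2)) * g (Psi q.2) =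
      \sum_(q <- cop H p.1) T q.1 q.2 p.2.
    move=> p.
    have lfp : lin1 (fun b : B => f (b * Phi (ant H p.2))).
      exact: lin1_lf (linm_mulr _).
    have := Hc' p.1 g (mkLin lfp).
    rewrite /T => ->; apply: eq_bigr => q _.
    by rewrite mkLinE rmorphM mulrC.
  under eq_bigr => p _ do rewrite step1.
  have -> : \sum_(p <- cop H x) \sum_(q <- cop H p.1) T q.1 q.2 p.2 =
     \sum_(t <- [seq (q.1, q.2, p.2) | p <- cop H x, q <- cop H p.1])
        T t.1.1 t.1.2 t.2 by rewrite big_allpairs_dep.
  rewrite (teq3_tril (coassoc H x)); last first.
    split.
    - by move=> b c; apply: lin1_mulr; apply: lin1_lf; apply: linm_lin.
    - move=> a c; apply: lin1_mull; apply: lin1_lf.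
      exact: (linm_comp (linm_lin Phi) (linm_mulr _)).
    - move=> a b; apply: lin1_mull; apply: lin1_lf.
      exact: (linm_comp (fun k x y => ant_linear H k x y)
               (linm_comp (linm_lin Phi) (linm_mull _))).
  rewrite big_allpairs_dep /= /T.
  under eq_bigr => p _ do rewrite -mulr_sumr.
  have ea : forall z, \sum_(i <- cop H z) f (Phi i.1 * Phi (ant H i.2)) = cnt H z * f 1.
    move=> z; under eq_bigr => i _ do rewrite -rmorphM.
    by rewrite -!linear_sum (antr H z) linearZ rmorph1 linearZ.
  under eq_bigr => p _ do rewrite ea.
  rewrite -[in RHS](counitr H x) !linear_sum mulr_sumr; apply: eq_bigr => p _.
  rewrite !linearZ /=.
  change (g (Psi p.1) * (cnt H p.2 * f 1) = f 1 * (cnt H p.2 * g (Psi p.1))).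
  by rewrite mulrCA [RHS]mulrCA (mulrC (g _)).
- move=> Had y f g.
  have Had' : forall x (f' : {linear B -> K^o}) (g' : {linear C -> K^o}),
      \sum_(p <- cop H x) \sum_(q <- cop H p.1)
         f' (Phi (q.1 * ant H p.2)) * g' (Psi q.2) = f' 1 * g' (Psi x).
    move=> x f' g'; have := Had x f' g'.
    by rewrite big_seq1 /tmap /ad big_map big_allpairs_dep.
  rewrite /tmap /tflip !big_map /=.
  pose T (X c3 c4 : A) := \sum_(q <- cop H X)
      g (Phi (q.1 * ant H c3) * Phi c4) * f (Psi q.2).
  have step1 : forall p : A * A,
      f (Psi p.1) * g (Phi p.2) = \sum_(r <- cop H p.1) T r.1 r.2 p.2.
    move=> p.
    have lgp : lin1 (fun b : B => g (b * Phi p.2)) by exact: lin1_lf (linm_mulr _).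
    have e := Had' p.1 (mkLin lgp) f.
    rewrite mkLinE /= mul1r in e.
    by rewrite mulrC -e.
  rewrite (eq_bigr _ (fun p _ => step1 p)).
  have -> : \sum_(p <- cop H y) \sum_(r <- cop H p.1) T r.1 r.2 p.2 =
     \sum_(t <- [seq (q.1, q.2, p.2) | p <- cop H y, q <- cop H p.1])
        T t.1.1 t.1.2 t.2 by rewrite big_allpairs_dep.
  rewrite (teq3_tril (coassoc H y)); last first.
    rewrite /T; split.
    - move=> b c.
      apply: (@copL K A H (fun a => g (Phi (a * ant H b) * Phi c)) (fun a => f (Psi a))).
      + exact: lin1_lf (linm_comp (linm_mulr _)
                          (linm_comp (linm_lin Phi) (linm_mulr _))).
      + exact: lin1_lf (linm_lin Psi).
    - move=> a c; apply: lin1_sumf => q; apply: lin1_mulr; apply: lin1_lf.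
      exact: (linm_comp (fun k x y => ant_linear H k x y)
               (linm_comp (linm_mull _) (linm_comp (linm_lin Phi) (linm_mulr _)))).
    - move=> a b; apply: lin1_sumf => q; apply: lin1_mulr; apply: lin1_lf.
      exact: (linm_comp (linm_lin Phi) (linm_mull _)).
  rewrite big_allpairs_dep /= /T.
  have eb : forall a z : A, \sum_(r <- cop H z) g (Phi (a * ant H r.1) * Phi r.2)
      = cnt H z * g (Phi a).
    move=> a z; under eq_bigr => r _ do rewrite -rmorphM -mulrA.
    rewrite -!linear_sum -mulr_sumr (antl H z) -scalerAr mulr1.
    by rewrite !linearZ.
  under eq_bigr => p _ do rewrite exchange_big /=.
  under eq_bigr => p _ do under eq_bigr => q _ do rewrite -mulr_suml eb.
  pose Lam X := \sum_(q <- cop H X) g (Phi q.1) * f (Psi q.2).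
  have LamL : lin1 Lam.
    exact: copL (lin1_lf _ (linm_lin Phi)) (lin1_lf _ (linm_lin Psi)).
  transitivity (Lam (\sum_(p <- cop H y) cnt H p.2 *: p.1)).
    rewrite lin1_sum //; apply: eq_bigr => p _.
    rewrite lin1_Z // /Lam mulr_sumr; apply: eq_bigr => q _.
    by rewrite mulrA.
  rewrite counitr /Lam; apply: eq_bigr => p _.
  by rewrite mulrC.
Qed.
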